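(* Let $X$ be a proper metric space, $W\subset X$ a closed subset, $g:W\to\mathbb R$ a function, and $f_n:X\to\mathbb R_+$ ($n=1,2,\dots$) coarsely proper functions with $f_n|_W\ge g$ for all $n$. Then there exist bounded subsets $A_n\subset X$ and a coarsely proper function $f:X\to\mathbb R_+$ such that $f|_W\ge g$, and for every $n$: $f(x)\le n$ for $x\in A_n$ and $f(x)\le f_n(x)$ for $x\in X\setminus A_n$.
   Context: $\mathbb R_+=[0,\infty)$. A function is coarsely proper if preimages of bounded sets are bounded (functions need not be continuous). *)

(* Defs.v *)
From mathcomp Require Import all_boot all_order all_algebra.
From mathcomp Require Import boolp classical_sets reals.
From Stdlib Require List.
Set Implicit Arguments. Unset Strict Implicit. Unset Printing Implicit Defensive.
Import Order.TTheory GRing.Theory Num.Theory.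
Local Open Scope ring_scope.
Local Open Scope classical_set_scope.

Definition is_metric (R : realType) (X : Type) (d : X -> X -> R) : Prop :=
  (forall x y, 0 <= d x y) /\
  (forall x y, d x y = 0 <-> x = y) /\
  (forall x y, d x y = d y x) /\
  (forall x y z, d x z <= d x y + d y z).

Definition mopen (R : realType) (X : Type) (d : X -> X -> R) (U : set X) : Prop :=
  forall x, U x -> exists2 e : R, 0 < e & forall y, d x y < e -> U y.

Definition mclosed (R : realType) (X : Type) (d : X -> X -> R) (W : set X) : Prop :=
  mopen d (~` W).

Definition mbounded (R : realType) (X : Type) (d : X -> X -> R) (A : set X) : Prop :=
  exists r : R, forall x y, A x -> A y -> d x y <= r.

Definition mcompact (R : realType) (X : Type) (d : X -> X -> R) (K : set X) : Prop :=
  forall (I : Type) (U : I -> set X), (forall i, mopen d (U i)) ->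
    (forall x, K x -> exists i, U i x) ->
    exists s : list I, forall x, K x -> exists i, List.In i s /\ U i x.

Definition proper_metric (R : realType) (X : Type) (d : X -> X -> R) : Prop :=
  is_metric d /\ forall K, mclosed d K -> mbounded d K -> mcompact d K.

Definition rbounded (R : realType) (B : set R) : Prop :=
  exists M : R, forall t, B t -> `|t| <= M.

Definition coarsely_proper (R : realType) (X : Type) (d : X -> X -> R) (f : X -> R) : Prop :=
  forall B : set R, rbounded B -> mbounded d (f @^-1` B).

(* Main.v *)
Require Import Defs.
From mathcomp Require Import all_boot all_order all_algebra.
From mathcomp Require Import boolp classical_sets reals.
From mathcomp Require Import lra.
Import Order.TTheory GRing.Theory Num.Theory.
Local Open Scope ring_scope.
Local Open Scope classical_set_scope.

Lemma mbounded_sub (R : realType) (X : Type) (d : X -> X -> R) (A B : set X) :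
  A `<=` B -> mbounded d B -> mbounded d A.
Proof. move=> AB [r Hr]; exists r => x y /AB Ax /AB Ay; exact: Hr. Qed.

Lemma mbounded_setU (R : realType) (X : Type) (d : X -> X -> R) (A B : set X) :
  is_metric d -> mbounded d A -> mbounded d B -> mbounded d (A `|` B).
Proof.
move=> [d0 [_ [dsym dtri]]] [rA HA] [rB HB].
have [[a Aa]|nA] := pselect (exists a, A a); last first.
  exists rB => x y [Ax|Bx] [Ay|By]; try (exfalso; apply: nA; by eexists; eauto).
  exact: HB.
have [[b Bb]|nB] := pselect (exists b, B b); last first.
  exists rA => x y [Ax|Bx] [Ay|By]; try (exfalso; apply: nB; by eexists; eauto).
  exact: HA.
have rA0 : 0 <= rA by apply: le_trans (d0 a a) (HA _ _ Aa Aa).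
have rB0 : 0 <= rB by apply: le_trans (d0 b b) (HB _ _ Bb Bb).
exists (rA + rB + d a b) => x y [Ax|Bx] [Ay|By].
- by apply: le_trans (HA _ _ Ax Ay) _; rewrite -addrA lerDl addr_ge0.
- have h1 := HA _ _ Ax Aa; have h2 := HB _ _ Bb By; have h3 := dtri x a y;
  have h4 := dtri a b y; lra.
- have h1 := HB _ _ Bx Bb; have h2 := HA _ _ Aa Ay; have h3 := dtri x b y;
  have h4 := dtri b a y; have h5 := dsym a b; lra.
- by apply: le_trans (HB _ _ Bx By) _; rewrite addrAC lerDr addr_ge0.
Qed.

Lemma mbounded_finU (R : realType) (X : Type) (d : X -> X -> R) (S : nat -> set X) :
  is_metric d -> (forall n, (0 < n)%N -> mbounded d (S n)) ->
  forall N, mbounded d [set x | exists n, [/\ (0 < n)%N, (n <= N)%N & S n x]].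
Proof.
move=> dm HS; elim=> [|N IH].
  by exists 0 => x y [n [n0 nN _]]; move: n0; rewrite lt0n -leqn0 nN.
apply: (@mbounded_sub _ _ d _ ([set x | exists n, [/\ (0 < n)%N, (n <= N)%N & S n x]]
   `|` S N.+1)); last by apply: mbounded_setU => //; exact: HS.
move=> x [n [n0]]; rewrite leq_eqVlt => /orP[/eqP->|]; first by right.
by rewrite ltnS => nN Sx; left; exists n.
Qed.

Theorem proposition7p5 (R : realType) (X : Type) (d : X -> X -> R)
  (W : set X) (g : X -> R) (fs : nat -> X -> R) :
  proper_metric d ->
  mclosed d W ->
  (forall n, (0 < n)%N -> forall x, 0 <= fs n x) ->
  (forall n, (0 < n)%N -> coarsely_proper d (fs n)) ->
  (forall n, (0 < n)%N -> forall x, W x -> g x <= fs n x) ->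
  exists (A : nat -> set X) (f : X -> R),
    (forall x, 0 <= f x) /\
    coarsely_proper d f /\
    (forall x, W x -> g x <= f x) /\
    (forall n, (0 < n)%N ->
       mbounded d (A n) /\
       (forall x, A n x -> f x <= n%:R) /\
       (forall x, ~ A n x -> f x <= fs n x)).
Proof.
move=> [dm _] _ fs0 fsc gfs.
pose E x := [set Num.max (n%:R) (fs n x) | n in [set n : nat | (0 < n)%N]].
pose f x := inf (E x).
have Ene x : nonempty (E x) by exists (Num.max 1%:R (fs 1 x)); exists 1%N.
have Elb x : lbound (E x) 0.
  move=> _ [n n0 <-]; rewrite le_max; apply/orP; right; exact: fs0.
have Ehas x : has_lbound (E x) by exists 0.
have fle x n : (0 < n)%N -> f x <= Num.max (n%:R) (fs n x).
  by move=> n0; apply: (ge_inf (Ehas x)); exists n.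
have fcp : coarsely_proper d f.
  move=> B [M HM].
  pose N := Num.bound (`|M| + 1).
  have NM : `|M| + 1 < N%:R by apply: archi_boundP; rewrite addr_ge0.
  pose S n := [set x | fs n x <= `|M| + 1].
  have HS : forall n, (0 < n)%N -> mbounded d (S n).
    move=> n n0; apply: (@mbounded_sub _ _ d _ (fs n @^-1` [set t | `|t| <= `|M| + 1])).
      move=> x /= Sx; rewrite ger0_norm //; exact: fs0.
    by apply: fsc => //; exists (`|M| + 1).
  apply: (@mbounded_sub _ _ d _ _ _ (@mbounded_finU _ _ d S dm HS N)).
  move=> x /= Bfx.
  have fxM : f x <= `|M| := le_trans (ler_norm (f x)) (le_trans (HM _ Bfx) (ler_norm M)).
  have [e [n n0 <-] en] := inf_adherent (ltr01 : (0:R) < 1) (conj (Ene x) (Ehas x)).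
  have h : Num.max (n%:R) (fs n x) < `|M| + 1 by apply: lt_le_trans en _; rewrite lerD2r.
  move: h; rewrite gt_max => /andP[h1 h2].
  exists n; split => //; last exact: ltW.
  rewrite -(ler_nat R); apply: ltW; apply: lt_trans h1 NM.
exists (fun n => [set x | f x <= n%:R]), f; split; last split => //; last split.
- by move=> x; apply: lb_le_inf.
- move=> x Wx; apply: lb_le_inf => // _ [n n0 <-].
  by rewrite le_max; apply/orP; right; exact: gfs.
move=> n n0; split; last split => //.
- apply: (@mbounded_sub _ _ d _ (f @^-1` [set t | `|t| <= n%:R])).
    move=> x /= fx; rewrite ger0_norm //; exact: lb_le_inf.
  by apply: fcp; exists n%:R.
move=> x /negP; rewrite -ltNge => fxn.
have := fle x n n0; rewrite le_max => /orP[] // h.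
by have := lt_le_trans fxn h; rewrite ltxx.
Qed.
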